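(* There is a constant $C_0\ge 1$, depending only on $\gamma_2$ and $\varkappa$, such that if the constant $C$ in the definition of the weights $e_{\gamma,\varkappa}$ satisfies $C\ge C_0$, then the following hold, where $\gamma=(\gamma_1,\gamma_2)\ge(0,0)$ and $\varkappa\ge 0$. (i) If $\gamma_1\ge 0$ and $\gamma_2-\varkappa\ge 0$, then $$e_{\gamma,\varkappa}(a,b)\le e_{\gamma,0}(a,c)\,e_{\gamma,\varkappa}(c,b)\qquad\text{for all } a,b,c\in\mathbb Z^{d_*}.$$ (ii) If $\tilde\gamma\in\mathbb R^2$ satisfies $-\gamma\le\tilde\gamma\le\gamma$ (componentwise), then $$e_{\tilde\gamma,\varkappa}(a,0)\le e_{\gamma,\varkappa}(a,b)\,e_{\tilde\gamma,\varkappa}(b,0)\qquad\text{for all } a,b\in\mathbb Z^{d_*}.$$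
   Context: Let $d_*\ge1$. For $a\in\mathbb Z^{d_*}$, $|a|$ is the Euclidean norm and $\langle a\rangle=\max(|a|,1)$. For $a,b\in\mathbb Z^{d_*}$ put $[a-b]=\min(|a-b|,|a+b|)$. Pairs in $\mathbb R^2$ are ordered componentwise: $(x_1,x_2)\le(y_1,y_2)$ iff $x_1\le y_1$ and $x_2\le y_2$. For $\gamma=(\gamma_1,\gamma_2)\in\mathbb R^2$ and $\varkappa\ge0$, with a fixed constant $C\ge1$, define $$e_{\gamma,\varkappa}(a,b)=C\,e^{\gamma_1[a-b]}\max([a-b],1)^{\gamma_2}\min(\langle a\rangle,\langle b\rangle)^{\varkappa}.$$ *)

(* Defs.v *)
From Stdlib Require Import Reals Lra ZArith.
Open Scope R_scope.

(* A lattice point of Z^d is represented by a function nat -> Z; only the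
   coordinates 0..d-1 matter (every point of Z^d arises this way). *)
Definition zvec := nat -> Z.

Definition vsub (a b : zvec) : zvec := fun i => (a i - b i)%Z.
Definition vadd (a b : zvec) : zvec := fun i => (a i + b i)%Z.
Definition vzero : zvec := fun _ => 0%Z.

Fixpoint sumR (n : nat) (f : nat -> R) : R :=
  match n with
  | O => 0
  | S m => sumR m f + f m
  end.

Definition znorm (d : nat) (a : zvec) : R :=
  sqrt (sumR d (fun i => (IZR (a i))^2)).

Definition jbr (d : nat) (a : zvec) : R := Rmax (znorm d a) 1.

Definition bdist (d : nat) (a b : zvec) : R :=
  Rmin (znorm d (vsub a b)) (znorm d (vadd a b)).

Definition ew (C : R) (d : nat) (g1 g2 kappa : R) (a b : zvec) : R :=
  C * exp (g1 * bdist d a b)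
    * Rpower (Rmax (bdist d a b) 1) g2
    * Rpower (Rmin (jbr d a) (jbr d b)) kappa.

(* Main.v *)
Require Import Defs.
From Stdlib Require Import Reals Lra Lia ZArith.
Open Scope R_scope.

Lemma lnle x y : 0 < x -> x <= y -> ln x <= ln y.
Proof. intros H1 H2. destruct H2 as [H2|H2]. left; apply ln_increasing; auto. subst; lra. Qed.
Lemma exple x y : x <= y -> exp x <= exp y.
Proof. intros [H|H]. left; apply exp_increasing; auto. subst; lra. Qed.

Definition nrm n (f : nat -> R) := sqrt (sumR n (fun i => f i ^ 2)).

Lemma sumR_ge0 n f : (forall i, 0 <= f i) -> 0 <= sumR n f.
Proof. intro H; induction n; simpl; [lra|]. specialize (H n); lra. Qed.

Lemma sumR_ext n f g : (forall i, f i = g i) -> sumR n f = sumR n g.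
Proof. intro H; induction n; simpl; auto. rewrite IHn, H; auto. Qed.

Lemma nrm_ext n f g : (forall i, f i ^ 2 = g i ^ 2) -> nrm n f = nrm n g.
Proof. intro H; unfold nrm; f_equal; apply sumR_ext; auto. Qed.

Lemma nrm_ge0 n f : 0 <= nrm n f.
Proof. apply sqrt_pos. Qed.

Lemma sqrt_le_of u v : 0 <= v -> u <= v * v -> sqrt u <= v.
Proof. intros H1 H2. rewrite <- (sqrt_square v) by auto. apply sqrt_le_1_alt; auto. Qed.

Lemma mink2 s p q x y : 0 <= s -> 0 <= p -> 0 <= q -> s <= p + q ->
  sqrt (s*s + (x+y)^2) <= sqrt (p*p + x^2) + sqrt (q*q + y^2).
Proof.
  intros. set (A := sqrt (p*p + x^2)). set (B := sqrt (q*q+y^2)).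
  assert (HA : A * A = p*p + x^2) by (apply sqrt_sqrt; nra).
  assert (HB : B * B = q*q + y^2) by (apply sqrt_sqrt; nra).
  assert (0 <= A) by apply sqrt_pos. assert (0 <= B) by apply sqrt_pos.
  apply sqrt_le_of; [lra|].
  assert (Hab : p*q + x*y <= A*B).
  { assert ((A*B)*(A*B) = (p*p+x^2)*(q*q+y^2)) by (rewrite <- HA, <- HB; ring).
    assert (0 <= A*B) by nra.
    assert ((p*q+x*y)*(p*q+x*y) <= (A*B)*(A*B)) by (pose proof (pow2_ge_0 (p*y-q*x)); nra).
    nra. }
  nra.
Qed.

Lemma nrm_tri n h f g f' g' : (forall i, h i = f i + g i) ->
  (forall i, f' i ^ 2 = f i ^ 2) -> (forall i, g' i ^2 = g i ^ 2) ->
  nrm n h <= nrm n f' + nrm n g'.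
Proof.
  intros Hh Hf Hg. rewrite (nrm_ext n f' f), (nrm_ext n g' g) by auto.
  induction n.
  - unfold nrm; simpl. rewrite sqrt_0; lra.
  - unfold nrm in *; cbn [sumR].
    set (S0 := sumR n (fun i => h i ^ 2)) in *.
    set (P := sumR n (fun i => f i ^ 2)) in *.
    set (Q := sumR n (fun i => g i ^ 2)) in *.
    assert (0 <= S0) by (apply sumR_ge0; intro; nra).
    assert (0 <= P) by (apply sumR_ge0; intro; nra).
    assert (0 <= Q) by (apply sumR_ge0; intro; nra).
    rewrite <- (sqrt_sqrt S0), <- (sqrt_sqrt P), <- (sqrt_sqrt Q) by auto.
    rewrite Hh. apply mink2; auto; apply sqrt_pos.
Qed.

Lemma zn d a : znorm d a = nrm d (fun i => IZR (a i)).
Proof. reflexivity. Qed.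

Ltac ptw := intro i; unfold vsub, vadd; rewrite ?minus_IZR, ?plus_IZR; ring.

Lemma bdist_tri d a b c : bdist d a b <= bdist d a c + bdist d c b.
Proof.
  unfold bdist. rewrite !zn.
  assert (H1 : nrm d (fun i => IZR (vsub a b i)) <= nrm d (fun i => IZR (vsub a c i)) + nrm d (fun i => IZR (vsub c b i)))
    by (apply nrm_tri with (f := fun i => IZR (vsub a c i)) (g := fun i => IZR (vsub c b i)); ptw).
  assert (H2 : nrm d (fun i => IZR (vsub a b i)) <= nrm d (fun i => IZR (vadd a c i)) + nrm d (fun i => IZR (vadd c b i)))
    by (apply nrm_tri with (f := fun i => IZR (vadd a c i)) (g := fun i => - IZR (vadd c b i)); ptw).
  assert (H3 : nrm d (fun i => IZR (vadd a b i)) <= nrm d (fun i => IZR (vsub a c i)) + nrm d (fun i => IZR (vadd c b i)))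
    by (apply nrm_tri with (f := fun i => IZR (vsub a c i)) (g := fun i => IZR (vadd c b i)); ptw).
  assert (H4 : nrm d (fun i => IZR (vadd a b i)) <= nrm d (fun i => IZR (vadd a c i)) + nrm d (fun i => IZR (vsub c b i)))
    by (apply nrm_tri with (f := fun i => IZR (vadd a c i)) (g := fun i => - IZR (vsub c b i)); ptw).
  unfold Rmin; repeat destruct Rle_dec; lra.
Qed.

Lemma bdist_sym d a b : bdist d a b = bdist d b a.
Proof.
  unfold bdist; rewrite !zn.
  rewrite (nrm_ext d (fun i => IZR (vsub a b i)) (fun i => IZR (vsub b a i))) by ptw.
  rewrite (nrm_ext d (fun i => IZR (vadd a b i)) (fun i => IZR (vadd b a i))) by ptw.
  reflexivity.
Qed.

Lemma bdist_ge0 d a b : 0 <= bdist d a b.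
Proof. unfold bdist, Rmin; destruct Rle_dec; apply sqrt_pos. Qed.

Lemma bdist0 d a : bdist d a vzero = znorm d a.
Proof.
  unfold bdist; rewrite !zn.
  rewrite (nrm_ext d (fun i => IZR (vsub a vzero i)) (fun i => IZR (a i))) by (unfold vzero; ptw).
  rewrite (nrm_ext d (fun i => IZR (vadd a vzero i)) (fun i => IZR (a i))) by (unfold vzero; ptw).
  unfold Rmin; destruct Rle_dec; auto.
Qed.

Lemma znorm_tri d a c : znorm d a <= znorm d c + bdist d a c.
Proof.
  unfold bdist; rewrite !zn.
  assert (H1 : nrm d (fun i => IZR (a i)) <= nrm d (fun i => IZR (c i)) + nrm d (fun i => IZR (vsub a c i)))
    by (apply nrm_tri with (f := fun i => IZR (c i)) (g := fun i => IZR (vsub a c i)); ptw).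
  assert (H2 : nrm d (fun i => IZR (a i)) <= nrm d (fun i => IZR (c i)) + nrm d (fun i => IZR (vadd a c i)))
    by (apply nrm_tri with (f := fun i => - IZR (c i)) (g := fun i => IZR (vadd a c i)); ptw).
  unfold Rmin; destruct Rle_dec; lra.
Qed.

Lemma jbr_ge1 d a : 1 <= jbr d a.
Proof. unfold jbr; apply Rmax_r. Qed.

Lemma jbr_tri d a c : jbr d a <= jbr d c + bdist d a c.
Proof.
  pose proof (znorm_tri d a c). pose proof (bdist_ge0 d a c).
  unfold jbr, Rmax; repeat destruct Rle_dec; lra.
Qed.

Lemma jbr0 d : jbr d vzero = 1.
Proof.
  unfold jbr, znorm. rewrite (sumR_ext d _ (fun _ => 0)).
  - assert (sumR d (fun _ => 0) = 0) as E by (induction d; simpl; lra).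
    rewrite E, sqrt_0. unfold Rmax; destruct Rle_dec; lra.
  - intro; unfold vzero; simpl; ring.
Qed.

Lemma two_mul x y : 1 <= x -> 1 <= y -> x + y <= 2 * x * y.
Proof. intros; nra. Qed.

Lemma mfact d a b c :
  Rmin (jbr d a) (jbr d b) <= 2 * Rmin (jbr d c) (jbr d b) * Rmax (bdist d a c) 1 /\
  Rmin (jbr d a) (jbr d b) <= 2 * Rmin (jbr d c) (jbr d b) * Rmax (bdist d c b) 1.
Proof.
  pose proof (jbr_tri d a c). pose proof (jbr_tri d b c). rewrite (bdist_sym d b c) in H0.
  pose proof (jbr_ge1 d a). pose proof (jbr_ge1 d b). pose proof (jbr_ge1 d c).
  assert (Hx : bdist d a c <= Rmax (bdist d a c) 1 /\ 1 <= Rmax (bdist d a c) 1) by (split; [apply Rmax_l|apply Rmax_r]).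
  assert (Hy : bdist d c b <= Rmax (bdist d c b) 1 /\ 1 <= Rmax (bdist d c b) 1) by (split; [apply Rmax_l|apply Rmax_r]).
  set (x := Rmax (bdist d a c) 1) in *. set (y := Rmax (bdist d c b) 1) in *.
  pose proof (Rmin_l (jbr d a) (jbr d b)). pose proof (Rmin_r (jbr d a) (jbr d b)).
  set (m := Rmin (jbr d a) (jbr d b)) in *.
  unfold Rmin; destruct Rle_dec; split.
  - pose proof (two_mul (jbr d c) x). nra.
  - pose proof (two_mul (jbr d c) y). nra.
  - nra.
  - nra.
Qed.

Lemma Mfact d a b c : Rmax (bdist d a b) 1 <= Rmax (bdist d a c) 1 + Rmax (bdist d c b) 1.
Proof.
  pose proof (bdist_tri d a b c). pose proof (bdist_ge0 d a c). pose proof (bdist_ge0 d c b).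
  unfold Rmax; repeat destruct Rle_dec; lra.
Qed.

Lemma lnprod a b : 0 < a -> 0 < b -> ln (a * b) = ln a + ln b.
Proof. apply ln_mult. Qed.

Theorem lemma2p1 :
  forall (g2 kappa : R), 0 <= g2 -> 0 <= kappa ->
  exists C0 : R, 1 <= C0 /\
  forall (C : R), C0 <= C ->
  forall (d : nat), (1 <= d)%nat ->
  forall (g1 : R), 0 <= g1 ->
    ((0 <= g2 - kappa) ->
      forall a b c : zvec,
        ew C d g1 g2 kappa a b <= ew C d g1 g2 0 a c * ew C d g1 g2 kappa c b)
    /\
    (forall (t1 t2 : R), - g1 <= t1 <= g1 -> - g2 <= t2 <= g2 ->
      forall a b : zvec,
        ew C d t1 t2 kappa a vzero <= ew C d g1 g2 kappa a b * ew C d t1 t2 kappa b vzero).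
Proof.
  intros g2 k Hg2 Hk.
  assert (Hl2 : 0 < ln 2) by (rewrite <- ln_1; apply ln_increasing; lra).
  exists (exp ((g2 + k) * ln 2)). split.
  { pose proof (exp_ineq1_le ((g2 + k) * ln 2)). nra. }
  intros C HC d Hd g1 Hg1.
  assert (HC0 : 0 < C) by (pose proof (exp_pos ((g2 + k) * ln 2)); lra).
  assert (HlC : (g2 + k) * ln 2 <= ln C) by (rewrite <- (ln_exp ((g2+k)*ln 2)); apply lnle; [apply exp_pos|lra]).
  split.
  - intros Hgk a b c. unfold ew, Rpower.
    pose proof (bdist_tri d a b c) as Htri.
    destruct (mfact d a b c) as [m1 m2]. pose proof (Mfact d a b c) as MM.
    pose proof (jbr_ge1 d a). pose proof (jbr_ge1 d b). pose proof (jbr_ge1 d c).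
    assert (1 <= Rmax (bdist d a c) 1) by apply Rmax_r.
    assert (1 <= Rmax (bdist d c b) 1) by apply Rmax_r.
    assert (1 <= Rmax (bdist d a b) 1) by apply Rmax_r.
    assert (1 <= Rmin (jbr d a) (jbr d b)) by (unfold Rmin; destruct Rle_dec; lra).
    assert (1 <= Rmin (jbr d c) (jbr d b)) by (unfold Rmin; destruct Rle_dec; lra).
    set (Dab := bdist d a b) in *. set (Dac := bdist d a c) in *. set (Dcb := bdist d c b) in *.
    set (Mab := Rmax Dab 1) in *. set (Mac := Rmax Dac 1) in *. set (Mcb := Rmax Dcb 1) in *.
    set (mab := Rmin (jbr d a) (jbr d b)) in *. set (mcb := Rmin (jbr d c) (jbr d b)) in *.
    set (mac := Rmin (jbr d a) (jbr d c)).
    apply Rle_trans with (C * exp (g1*Dab + g2*ln Mab + k*ln mab)).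
    { right; rewrite !exp_plus; ring. }
    apply Rle_trans with (C * (C * exp (g1*Dac + g2*ln Mac + 0*ln mac + (g1*Dcb + g2*ln Mcb + k*ln mcb)))).
    2: { right; rewrite !exp_plus; ring. }
    apply Rmult_le_compat_l; [lra|]. rewrite <- (exp_ln C) at 1 by lra. rewrite <- exp_plus. apply exple.
    assert (g1 * Dab <= g1 * (Dac + Dcb)) by (apply Rmult_le_compat_l; lra).
    assert (0 <= ln Mac) by (rewrite <- ln_1; apply lnle; lra).
    assert (0 <= ln Mcb) by (rewrite <- ln_1; apply lnle; lra).
    destruct (Rle_dec Mac Mcb).
    + assert (ln Mab <= ln 2 + ln Mcb) by (rewrite <- lnprod by lra; apply lnle; lra).
      assert (ln mab <= ln 2 + ln mcb + ln Mac) by (rewrite <- !lnprod by lra; apply lnle; lra).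
      assert (g2 * ln Mab <= g2 * (ln 2 + ln Mcb)) by (apply Rmult_le_compat_l; lra).
      assert (k * ln mab <= k * (ln 2 + ln mcb + ln Mac)) by (apply Rmult_le_compat_l; lra).
      assert (k * ln Mac <= g2 * ln Mac) by (apply Rmult_le_compat_r; lra).
      nra.
    + assert (ln Mab <= ln 2 + ln Mac) by (rewrite <- lnprod by lra; apply lnle; lra).
      assert (ln mab <= ln 2 + ln mcb + ln Mcb) by (rewrite <- !lnprod by lra; apply lnle; lra).
      assert (g2 * ln Mab <= g2 * (ln 2 + ln Mac)) by (apply Rmult_le_compat_l; lra).
      assert (k * ln mab <= k * (ln 2 + ln mcb + ln Mcb)) by (apply Rmult_le_compat_l; lra).
      assert (k * ln Mcb <= g2 * ln Mcb) by (apply Rmult_le_compat_r; lra).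
      nra.
  - intros t1 t2 Ht1 Ht2 a b. unfold ew, Rpower.
    rewrite !bdist0, !jbr0.
    pose proof (jbr_ge1 d a). pose proof (jbr_ge1 d b).
    rewrite (Rmin_right (jbr d a) 1), (Rmin_right (jbr d b) 1) by lra.
    fold (jbr d a). fold (jbr d b).
    pose proof (znorm_tri d a b) as Ta. pose proof (znorm_tri d b a) as Tb. rewrite bdist_sym in Tb.
    pose proof (jbr_tri d a b) as Ja. pose proof (jbr_tri d b a) as Jb. rewrite bdist_sym in Jb.
    pose proof (bdist_ge0 d a b).
    assert (1 <= Rmax (bdist d a b) 1) by apply Rmax_r.
    assert (bdist d a b <= Rmax (bdist d a b) 1) by apply Rmax_l.
    assert (1 <= Rmin (jbr d a) (jbr d b)) by (unfold Rmin; destruct Rle_dec; lra).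
    set (Dab := bdist d a b) in *. set (Mab := Rmax Dab 1) in *.
    set (mab := Rmin (jbr d a) (jbr d b)) in *.
    set (A := znorm d a) in *. set (B := znorm d b) in *.
    set (ja := jbr d a) in *. set (jb := jbr d b) in *.
    apply Rle_trans with (C * exp (t1 * A + t2 * ln ja + k * ln 1)).
    { right; rewrite !exp_plus; ring. }
    apply Rle_trans with (C * (C * exp (g1*Dab + g2*ln Mab + k*ln mab + (t1*B + t2*ln jb + k*ln 1)))).
    2: { right; rewrite !exp_plus; ring. }
    apply Rmult_le_compat_l; [lra|]. rewrite <- (exp_ln C) at 1 by lra. rewrite <- exp_plus. apply exple.
    rewrite ln_1.
    assert (0 <= ln mab) by (rewrite <- ln_1; apply lnle; lra).
    assert (0 <= ln Mab) by (rewrite <- ln_1; apply lnle; lra).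
    assert (ln ja <= ln 2 + ln jb + ln Mab) by (rewrite <- !lnprod by lra; apply lnle; [lra|]; pose proof (two_mul ja Mab); pose proof (two_mul jb Mab); lra).
    assert (ln jb <= ln 2 + ln ja + ln Mab) by (rewrite <- !lnprod by lra; apply lnle; [lra|]; pose proof (two_mul ja Mab); pose proof (two_mul jb Mab); lra).
    assert (t1 * (A - B) <= g1 * Dab).
    { assert (0 <= (g1 - t1) * (Dab + (A - B))) by (apply Rmult_le_pos; lra).
      assert (0 <= (g1 + t1) * (Dab - (A - B))) by (apply Rmult_le_pos; lra). nra. }
    assert (t2 * (ln ja - ln jb) <= g2 * (ln 2 + ln Mab)).
    { set (W := ln 2 + ln Mab) in *. set (v := ln ja - ln jb).
      assert (0 <= (g2 - t2) * (W + v)) by (apply Rmult_le_pos; unfold v, W; lra).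
      assert (0 <= (g2 + t2) * (W - v)) by (apply Rmult_le_pos; unfold v, W; lra). nra. }
    assert (0 <= k * ln mab) by (apply Rmult_le_pos; lra).
    assert (0 <= k * ln 2) by (apply Rmult_le_pos; lra).
    nra.
Qed.
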